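(* Let $n\ge m\ge1$. Then for all Banach spaces $X,Y$ and all bounded linear operators $T:X\to Y$, $$\tau(T|\mathcal H(\mathbb D_{m+1}^{n+1}))\le\tau(T|\mathcal H(\mathbb D_m^n)).$$
   Context: Dyadic intervals: $\Delta_k^{(j)}:=[\frac{j-1}{2^k},\frac{j}{2^k})$. Haar functions: for $k\ge1$, integer $j$, $\chi_k^{(j)}(t)=+2^{(k-1)/2}$ on $\Delta_k^{(2j-1)}$, $-2^{(k-1)/2}$ on $\Delta_k^{(2j)}$, $0$ otherwise, $t\in[0,1)$. $\mathbb D_m^n:=\{(k,j):k=m,\dots,n;\ j=1,\dots,2^{k-1}\}$. For a finite set $\mathbb F$ of such indices and bounded linear $T:X\to Y$, $\tau(T|\mathcal H(\mathbb F))$ is the least $c\ge0$ such that $\|\sum_{(k,j)\in\mathbb F}Tx_k^{(j)}\chi_k^{(j)}|L_2\|\le c(\sum_{(k,j)\in\mathbb F}\|x_k^{(j)}\|^2)^{1/2}$ for all $x_k^{(j)}\in X$, where $\|\cdot|L_2\|$ is the Bochner $L_2([0,1),Y)$ norm. *)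

(* Defs.v *)
From HB Require Import structures.
From mathcomp Require Import all_boot all_order all_algebra.
From mathcomp Require Import all_classical all_reals all_analysis.
Set Implicit Arguments. Unset Strict Implicit. Unset Printing Implicit Defensive.
Import Order.TTheory GRing.Theory Num.Theory.
Import numFieldNormedType.Exports.
Local Open Scope classical_set_scope.
Local Open Scope ring_scope.

Definition in_dyadic {R : realType} (k j : nat) (t : R) : bool :=
  ((j.-1)%:R / 2 ^+ k <= t) && (t < j%:R / 2 ^+ k).

Definition haar {R : realType} (k j : nat) (t : R) : R :=
  if in_dyadic k (2 * j - 1) t then Num.sqrt (2 ^+ k.-1)
  else if in_dyadic k (2 * j) t then - Num.sqrt (2 ^+ k.-1)
  else 0.

Definition Dmn (m n : nat) : seq (nat * nat) :=
  [seq (k, j) | k <- iota m (n.+1 - m), j <- iota 1 (2 ^ k.-1)].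

(* The Haar-type inequality with constant c on the index set F:
   || sum_{(k,j) in F} T x_k^{(j)} chi_k^{(j)} | L_2([0,1),Y) ||
        <= c (sum_{(k,j) in F} ||x_k^{(j)}||^2)^{1/2},
   where the Bochner L_2 norm is (int_[0,1) ||f(t)||^2 dt)^{1/2}; the
   inequality between nonnegative quantities is stated after squaring,
   in the extended reals, to avoid taking [fine] of the integral. *)
Definition haar_ineq {R : realType} {X Y : normedModType R}
  (T : X -> Y) (F : seq (nat * nat)) (c : R) : Prop :=
  forall x : nat -> nat -> X,
    (\int[@lebesgue_measure R]_(t in `[0%R, 1%R[)
        ((`| \sum_(kj <- F) (haar kj.1 kj.2 t) *: T (x kj.1 kj.2) | ^+ 2)%:E)
     <= ((c * Num.sqrt (\sum_(kj <- F) `| x kj.1 kj.2 | ^+ 2)) ^+ 2)%:E)%E.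

Definition tau {R : realType} {X Y : normedModType R}
  (T : X -> Y) (F : seq (nat * nat)) : R :=
  inf [set c : R | 0 <= c /\ haar_ineq T F c].

Definition bounded_op {R : realType} {X Y : normedModType R} (T : X -> Y) : Prop :=
  exists M : R, forall x : X, `| T x | <= M * `| x |.

(* Main.v *)
Require Import Defs.
From HB Require Import structures.
From mathcomp Require Import all_boot all_order all_algebra.
From mathcomp Require Import all_classical all_reals all_analysis.
From mathcomp Require Import measurable_realfun.
From mathcomp Require Import measurable_realfun.
From mathcomp Require Import ring lra zify.
Notation mfunD := measurable_realfun.measurable_funD.
Notation mfunM := measurable_realfun.measurable_funM.
Import Order.TTheory GRing.Theory Num.Theory.
Import numFieldNormedType.Exports.
Local Open Scope classical_set_scope.
Local Open Scope ring_scope.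


Lemma Dmn_mem m n kj : kj \in Dmn m n ->
  [/\ (m <= kj.1)%N, (kj.1 <= n)%N, (1 <= kj.2)%N & (kj.2 <= 2 ^ kj.1.-1)%N].
Proof.
case/allpairsPdep => k [j [hk hj ->]] /=.
move: hk hj; rewrite !mem_iota => /andP[h1 h2] /andP[h3 h4]; split => //.
- by move: h1 h2; lia.
Qed.

Lemma Dmn_split (V : nmodType) (F : nat -> nat -> V) m n : (1 <= m)%N ->
  \sum_(kj <- Dmn m.+1 n.+1) F kj.1 kj.2 =
  \sum_(kj <- Dmn m n) F kj.1.+1 kj.2 +
  \sum_(kj <- Dmn m n) F kj.1.+1 (kj.2 + 2 ^ kj.1.-1)%N.
Proof.
move=> m1; rewrite /Dmn !big_allpairs_dep /= subSS.
rewrite -[m.+1]add1n iotaDl big_map -big_split /=.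
rewrite !big_seq; apply: eq_bigr => k; rewrite mem_iota => /andP[hk _].
have -> : (2 ^ (1 + k).-1 = 2 ^ k.-1 + 2 ^ k.-1)%N.
  rewrite add1n /= addnn -mul2n -expnS prednK //; lia.
rewrite iotaD big_cat /= add1n; congr (_ + _).
rewrite addnC iotaDl big_map; apply: eq_bigr => j _; rewrite addnC //.
Qed.

Section haar_lemmas.
Context {R : realType}.

Lemma in_dyadicS k i (t : R) : in_dyadic k.+1 i t = in_dyadic k i (2 * t).
Proof.
rewrite /in_dyadic exprS.
have p0 : (0 : R) < 2 ^+ k by rewrite exprn_gt0.
have p1 : (0 : R) < 2 * 2 ^+ k by rewrite mulr_gt0.
rewrite !ler_pdivrMr // !ltr_pdivlMr //.
have -> : t * (2 * 2 ^+ k) = 2 * t * 2 ^+ k by ring.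
by [].
Qed.

Lemma haarS k j (t : R) : (1 <= k)%N ->
  haar k.+1 j t = Num.sqrt 2 * haar k j (2 * t).
Proof.
move=> k1; rewrite /haar !in_dyadicS /=.
have -> : (2 : R) ^+ k = 2 * 2 ^+ k.-1 by rewrite -exprS prednK.
rewrite sqrtrM ?ler0n //.
by case: ifP => _; [|case: ifP => _]; rewrite ?mulrN ?mulr0.
Qed.

Lemma in_dyadic_shift k i (u : R) : (1 <= i)%N ->
  in_dyadic k (i + 2 ^ k) u = in_dyadic k i (u - 1).
Proof.
move=> i1; rewrite /in_dyadic.
have p0 : (0 : R) < 2 ^+ k by rewrite exprn_gt0.
have -> : (i + 2 ^ k).-1 = (i.-1 + 2 ^ k)%N by rewrite -subn1 -!subn1; lia.
rewrite !natrD !natrX !ler_pdivrMr // !ltr_pdivlMr //.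
congr (_ && _); apply/idP/idP; lra.
Qed.

Lemma haar_shift k j (u : R) : (1 <= k)%N -> (1 <= j)%N ->
  haar k (j + 2 ^ k.-1) u = haar k j (u - 1).
Proof.
move=> k1 j1; rewrite /haar.
have e2 : (2 ^ k = 2 * 2 ^ k.-1)%N by rewrite -expnS prednK.
have -> : (2 * (j + 2 ^ k.-1) - 1 = (2 * j - 1) + 2 ^ k)%N by lia.
have -> : (2 * (j + 2 ^ k.-1) = (2 * j) + 2 ^ k)%N by lia.
by rewrite !in_dyadic_shift //; lia.
Qed.

Lemma in_dyadic_neg k i (u : R) : u < 0 -> in_dyadic k i u = false.
Proof.
move=> u0; rewrite /in_dyadic.
have : 0 <= (i.-1)%:R / (2 : R) ^+ k by rewrite divr_ge0 // exprn_ge0.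
by case: leP => // h1 h2; lra.
Qed.

Lemma haar_neg k j (u : R) : u < 0 -> haar k j u = 0.
Proof. by move=> u0; rewrite /haar !in_dyadic_neg. Qed.

Lemma in_dyadic_ge1 k i (u : R) : 1 <= u -> (i <= 2 ^ k)%N -> in_dyadic k i u = false.
Proof.
move=> u1 ik; rewrite /in_dyadic.
have p0 : (0 : R) < 2 ^+ k by rewrite exprn_gt0.
have : i%:R / (2 : R) ^+ k <= 1.
  by rewrite ler_pdivrMr // mul1r -natrX ler_nat.
by case: (u < _) / ltP => h; rewrite ?andbF //; lra.
Qed.

Lemma haar_ge1 k j (u : R) : (1 <= k)%N -> (j <= 2 ^ k.-1)%N -> 1 <= u ->
  haar k j u = 0.
Proof.
move=> k1 jk u1; have e2 : (2 ^ k = 2 * 2 ^ k.-1)%N by rewrite -expnS prednK.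
by rewrite /haar !in_dyadic_ge1 //; lia.
Qed.

End haar_lemmas.

Section meas.
Context {R : realType} {Y : normedModType R}.

Lemma in_dyadic_meas k i : measurable_fun setT (fun t : R => in_dyadic k i t).
Proof.
apply: measurable_and.
  by apply: measurable_fun_ler; [exact: measurable_cst|exact: measurable_id].
by apply: measurable_fun_ltr; [exact: measurable_id|exact: measurable_cst].
Qed.

Lemma haar_sum_meas (F : seq (nat * nat)) (w : nat * nat -> Y) (g : Y -> R) :
  measurable_fun setT (fun u : R => g (\sum_(kj <- F) haar kj.1 kj.2 u *: w kj)).
Proof.
elim: F g => [|a F IH] g.
  by under eq_fun do rewrite big_nil; exact: measurable_cst.
set s := Num.sqrt (2 ^+ a.1.-1 : R).
have -> : (fun u : R => g (\sum_(kj <- a :: F) haar kj.1 kj.2 u *: w kj)) =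
  (fun u => if in_dyadic a.1 (2 * a.2 - 1) u then
              g (s *: w a + \sum_(kj <- F) haar kj.1 kj.2 u *: w kj)
            else if in_dyadic a.1 (2 * a.2) u then
              g ((- s) *: w a + \sum_(kj <- F) haar kj.1 kj.2 u *: w kj)
            else g (0 *: w a + \sum_(kj <- F) haar kj.1 kj.2 u *: w kj)).
  apply/funext => u; rewrite big_cons /haar.
  by case: ifP => _ //; case: ifP.
apply: measurable_fun_ifT; first exact: in_dyadic_meas.
  exact: (IH (fun y => g (s *: w a + y))).
apply: measurable_fun_ifT; first exact: in_dyadic_meas.
  exact: (IH (fun y => g ((- s) *: w a + y))).
exact: (IH (fun y => g (0 *: w a + y))).
Qed.

End meas.
Section cov.
Context {R : realType}.
Local Notation mu := (@lebesgue_measure R).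

Definition two_nng : {nonneg R} := 2%:nng.
Definition aff (a : R) : R -> R := fun t => 2 * t - a.

Lemma aff_meas a : measurable_fun setT (aff a).
Proof.
apply: mfunD; last exact: measurable_cst.
apply: mfunM; [exact: measurable_cst| exact: measurable_id].
Qed.

Lemma aff_meas' a : measurable_fun (setT : set (measurableTypeR R)) (aff a : _ -> measurableTypeR R).
Proof. exact: aff_meas. Qed.
#[local] Hint Extern 0 (measurable_fun _ (aff _)) => solve [exact: aff_meas'|exact: aff_meas] : core.

Lemma aff_pre_oc a x y : aff a @^-1` `]x, y]%classic = `](x + a) / 2, (y + a) / 2]%classic.
Proof.
apply/seteqP; split => t /=; rewrite !in_itv /= /aff.
  move=> /andP[h1 h2]; apply/andP; split.
    by rewrite ltr_pdivrMr //; lra.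
  by rewrite ler_pdivlMr //; lra.
move=> /andP[h1 h2]; apply/andP; split.
  by rewrite ltr_pdivrMr // in h1; lra.
by rewrite ler_pdivlMr // in h2; lra.
Qed.

Lemma lebesgue_aff a (A : set R) : measurable A ->
  mu A = (2%:E * mu (aff a @^-1` A))%E.
Proof.
move=> mA.
pose PF : measure (measurableTypeR R) R :=
  measure_function_pushforward__canonical__measure_function_Measure mu (aff_meas' a).
pose nu : measure (measurableTypeR R) R := measure_function_mscale__canonical__measure_function_Measure two_nng PF.
have := @lebesgue_measure_unique R nu _ A mA.
move=> ->; first by [].
move=> _ [[x y]] _ <-.
change (mu `]x, y] = (2%:E * mu (aff a @^-1` `]x, y]))%E)%classic.
rewrite aff_pre_oc !lebesgue_measure_itv /= !lte_fin.
have -> : ((x + a) / 2 < (y + a) / 2) = (x < y).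
  by rewrite ltr_pM2r ?invr_gt0 // ltrD2r.
case: ifP => _; last by rewrite mule0.
by rewrite -EFinB -EFinB -EFinM; congr (_%:E); field.
Qed.

Lemma aff_pre_co a : aff a @^-1` `[0, 1[%classic = `[a / 2, (a + 1) / 2[%classic.
Proof.
apply/seteqP; split => t /=; rewrite !in_itv /= /aff.
  move=> /andP[h1 h2]; apply/andP; split.
    by rewrite ler_pdivrMr //; lra.
  by rewrite ltr_pdivlMr //; lra.
move=> /andP[h1 h2]; apply/andP; split.
  by rewrite ler_pdivrMr // in h1; lra.
by rewrite ltr_pdivlMr // in h2; lra.
Qed.

Lemma cov (a : R) {g : R -> R} : measurable_fun setT g -> (forall u, 0 <= g u) ->
  (\int[mu]_(u in `[0%R, 1%R[) (g u)%:E =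
   \int[mu]_(t in `[(a / 2)%R, ((a + 1) / 2)%R[) ((2 * g (aff a t))%R%:E))%E.
Proof.
move=> mg g0.
pose PF : measure (measurableTypeR R) R :=
  measure_function_pushforward__canonical__measure_function_Measure mu (aff_meas' a).
pose nu : measure (measurableTypeR R) R := measure_function_mscale__canonical__measure_function_Measure two_nng PF.
rewrite (eq_measure_integral nu) /=; last first.
  by move=> A mA _; rewrite (lebesgue_aff a).
have mg' : measurable_fun setT (fun x => (g x)%:E) by apply/measurable_EFinP.
rewrite ge0_integral_mscale //=; last 2 first.
- exact: measurable_funS mg'.
- by move=> x _; rewrite lee_fin.
rewrite (ge0_integral_pushforward (aff_meas' a)) //=; last 2 first.
- exact: measurable_funS mg'.
- by move=> x _; rewrite lee_fin.
rewrite aff_pre_co -ge0_integralZl_EFin //.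
all: try by apply: eq_integral => x _; rewrite /= EFinM.
all: try by move=> x _; rewrite lee_fin.
apply: measurable_funS (measurableT_comp mg' (aff_meas a)) => //.

Qed.
End cov.

Section main.
Context {R : realType} {X Y : normedModType R} (T : X -> Y).
Local Notation mu := (@lebesgue_measure R).

Definition Ssum F (x : nat -> nat -> X) (u : R) : Y :=
  \sum_(kj <- F) haar kj.1 kj.2 u *: T (x kj.1 kj.2).
Definition Gf F x (u : R) : R := `|Ssum F x u| ^+ 2.

Definition x1 (x : nat -> nat -> X) k j := x k.+1 j.
Definition x2 (x : nat -> nat -> X) k j := x k.+1 (j + 2 ^ k.-1)%N.

Lemma large_pt m n x t : (1 <= m)%N ->
  Ssum (Dmn m.+1 n.+1) x t =
  Num.sqrt 2 *: (Ssum (Dmn m n) (x1 x) (aff 0 t) + Ssum (Dmn m n) (x2 x) (aff 1 t)).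
Proof.
move=> m1; rewrite /Ssum (@Dmn_split _ (fun k j => haar k j t *: T (x k j)) m n m1).
rewrite scalerDr !scaler_sumr; congr (_ + _); rewrite !big_seq; apply: eq_bigr => kj.
  case/Dmn_mem => h1 _ _ _; rewrite haarS; last exact: leq_trans m1 h1.
  by rewrite scalerA /aff subr0.
case/Dmn_mem => h1 _ h3 _; rewrite haarS; last exact: leq_trans m1 h1.
by rewrite haar_shift //; [rewrite scalerA /aff | exact: leq_trans m1 h1].
Qed.

Lemma Ssum_neg m n z (u : R) : u < 0 -> Ssum (Dmn m n) z u = 0.
Proof.
move=> u0; rewrite /Ssum; apply: big1_seq => kj _; by rewrite haar_neg // scale0r.
Qed.

Lemma Ssum_ge1 m n z (u : R) : (1 <= m)%N -> 1 <= u -> Ssum (Dmn m n) z u = 0.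
Proof.
move=> m1 u1; rewrite /Ssum; apply: big1_seq => kj /andP[_ /Dmn_mem [h1 _ _ h4]].
by rewrite haar_ge1 ?scale0r //; exact: leq_trans m1 h1.
Qed.

Lemma Gf_meas F x : measurable_fun setT (Gf F x).
Proof. exact: (haar_sum_meas _ _ (fun y : Y => `|y| ^+ 2)). Qed.

Lemma Gf_ge0 F x u : 0 <= Gf F x u.
Proof. by rewrite /Gf sqr_ge0. Qed.

Lemma large_Gf m n x t : (1 <= m)%N ->
  Gf (Dmn m.+1 n.+1) x t =
  2 * `|Ssum (Dmn m n) (x1 x) (aff 0 t) + Ssum (Dmn m n) (x2 x) (aff 1 t)| ^+ 2.
Proof.
move=> m1; rewrite /Gf large_pt // normrZ ger0_norm ?sqrtr_ge0 //.
by rewrite exprMn sqr_sqrtr ?ler0n.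
Qed.

Lemma main_identity m n x : (1 <= m)%N ->
  (\int[mu]_(t in `[0%R, 1%R[) (Gf (Dmn m.+1 n.+1) x t)%:E =
   \int[mu]_(t in `[0%R, 1%R[) (Gf (Dmn m n) (x1 x) t)%:E +
   \int[mu]_(t in `[0%R, 1%R[) (Gf (Dmn m n) (x2 x) t)%:E)%E.
Proof.
move=> m1.
rewrite (cov 0 (Gf_meas (Dmn m n) (x1 x)) (Gf_ge0 _ _)) (cov 1 (Gf_meas (Dmn m n) (x2 x)) (Gf_ge0 _ _)).
have -> : `[0%R, 1%R[%classic = `[(0 / 2)%R, ((0 + 1) / 2)%R[%classic `|`
                                `[(1 / 2)%R, ((1 + 1) / 2)%R[%classic :> set R.
  apply/seteqP; split => t /=; rewrite !in_itv /=.
    by move=> /andP[h1 h2]; case: (ltP t (1/2)) => h; [left|right]; apply/andP; split; lra.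
  by case => /andP[h1 h2]; apply/andP; split; lra.
rewrite ge0_integral_setU //=.
- congr (_ + _); apply: eq_integral => t; rewrite inE /= in_itv /= => /andP[h1 h2].
    rewrite large_Gf // (@Ssum_neg _ _ _ (aff 1 t)) ?addr0 // /aff; lra.
  rewrite large_Gf // (@Ssum_ge1 _ _ _ (aff 0 t)) ?add0r // /aff; lra.
- apply/measurable_EFinP.
  exact: (measurable_funS measurableT (@subsetT _ _) (Gf_meas _ _)).
- by move=> t _; rewrite lee_fin Gf_ge0.
- rewrite /disj_set; apply/eqP/seteqP; split => // t [] /=.
  by rewrite !in_itv /= => /andP[_ h1] /andP[h2 _]; lra.
Qed.
End main.


Theorem proposition3p1 (R : realType) (X Y : completeNormedModType R)
  (T : {linear X -> Y}) (m n : nat) :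
  (1 <= m)%N -> (m <= n)%N -> bounded_op T ->
  tau T (Dmn m.+1 n.+1) <= tau T (Dmn m n).
Proof.
move=> m1 mn _.
have sum_ge0 (F : seq (nat * nat)) (z : nat -> nat -> X) :
    0 <= \sum_(kj <- F) `|z kj.1 kj.2| ^+ 2.
  by apply: sumr_ge0 => i _; exact: sqr_ge0.
have E c : haar_ineq T (Dmn m.+1 n.+1) c <-> haar_ineq T (Dmn m n) c.
  split => H z.
  - pose x k j := if (j <= 2 ^ k.-2)%N then z k.-1 j else 0.
    have e1 : Gf T (Dmn m n) (x1 x) = Gf T (Dmn m n) z.
      apply/funext => u; rewrite /Gf /Ssum; congr (`| _ | ^+ 2).
      rewrite !big_seq; apply: eq_bigr => kj /Dmn_mem [_ _ _ h4].
      by rewrite /x1 /x /= h4.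
    have e2 : Gf T (Dmn m n) (x2 x) = fun _ => 0.
      apply/funext => u; rewrite /Gf /Ssum big_seq big1 ?normr0 ?expr0n //.
      move=> kj /Dmn_mem [_ _ h3 _]; rewrite /x2 /x /=.
      have -> : (kj.2 + 2 ^ kj.1.-1 <= 2 ^ kj.1.-1)%N = false.
        by apply/negbTE; rewrite -ltnNge -[X in (X < _)%N]add0n ltn_add2r.
      by rewrite linear0 scaler0.
    have s1 : \sum_(kj <- Dmn m n) `|x1 x kj.1 kj.2| ^+ 2 =
              \sum_(kj <- Dmn m n) `|z kj.1 kj.2| ^+ 2.
      rewrite !big_seq; apply: eq_bigr => kj /Dmn_mem [_ _ _ h4].
      by rewrite /x1 /x /= h4.
    have s2 : \sum_(kj <- Dmn m n) `|x2 x kj.1 kj.2| ^+ 2 = 0.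
      rewrite big_seq big1 // => kj /Dmn_mem [_ _ h3 _]; rewrite /x2 /x /=.
      have -> : (kj.2 + 2 ^ kj.1.-1 <= 2 ^ kj.1.-1)%N = false.
        by apply/negbTE; rewrite -ltnNge -[X in (X < _)%N]add0n ltn_add2r.
      by rewrite normr0 expr0n.
    have i0 : (\int[@lebesgue_measure R]_(t in `[0%R, 1%R[)
                (Gf T (Dmn m n) (x2 x) t)%:E = 0)%E.
      by rewrite e2; apply: integral0_eq.
    have := H x.
    rewrite (main_identity T m n x m1) (@Dmn_split _ (fun k j => `|x k j| ^+ 2) m n m1).
    by rewrite i0 e1 -/(x1 x) -/(x2 x) s1 s2 adde0 addr0.
  - rewrite (main_identity T m n z m1) (@Dmn_split _ (fun k j => `|z k j| ^+ 2) m n m1).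
    apply: le_trans (leeD (H (x1 z)) (H (x2 z))) _.
    rewrite -EFinD lee_fin !exprMn (sqr_sqrtr (sum_ge0 _ _)) (sqr_sqrtr (sum_ge0 _ _)).
    rewrite sqr_sqrtr ?mulrDr //.
    by apply: addr_ge0; apply: sumr_ge0 => i _; exact: sqr_ge0.
rewrite le_eqVlt; apply/orP; left; apply/eqP.
rewrite /tau; congr inf.
by apply/seteqP; split => c /= [h0 h]; split => //; apply/E.
Qed.
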